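(* Let $(a_n)_{n\ge0}$ be the sequence defined by \[ \sum_{n=0}^{\infty}a_nz^n=\frac{1+36z+\sqrt{(1-12z)^3}}{2(1+4z)^2} \] (OEIS A220910). Then for every $n\ge0$, \[ a_n=\frac{1-8n}{2}(-4)^n+\binom{2n}{n}\sum_{k=0}^{n}\frac{3^{n+1}(k+1)\prod_{i=0}^{k-1}(n-i)}{8(-3)^k\prod_{i=0}^{k+1}(n-i-1/2)} \] and \[ a_n=\frac{(-4)^n(1-8n)}{16}\left[8-\sum_{k=0}^{n+1}\frac{(-3)^k}{k!}\prod_{i=0}^{k-1}(i-3/2)\right]+\binom{2n}{n}\frac{3^{n+3}}{32(n+1)}. \]
   Context: The square root is the branch analytic near $z=0$ with value $1$ at $z=0$. Empty products equal $1$. *)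

(* Defs.v *)
From HB Require Import structures.
From mathcomp Require Import all_boot all_order all_algebra.
Set Implicit Arguments. Unset Strict Implicit. Unset Printing Implicit Defensive.
Import Order.TTheory GRing.Theory Num.Theory.
Local Open Scope ring_scope.

Definition conv (R : ringType) (f g : nat -> R) (n : nat) : R :=
  \sum_(i < n.+1) f i * g (n - i)%N.

Definition pcoef (R : ringType) (p : {poly R}) : nat -> R := fun n => p`_n.

(* The generating-function hypothesis: s is the power series of
   sqrt((1-12z)^3) (square equals (1-12z)^3, constant term 1, i.e. the
   branch with value 1 at z = 0), and
   2 (1+4z)^2 * A(z) = 1 + 36 z + s(z). *)
Definition is_gf_A220910 (R : fieldType) (a s : nat -> R) : Prop :=
  [/\ s 0%N = 1,
      (forall n, conv s s n = pcoef ((1 - 12 * 'X) ^+ 3) n) &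
      (forall n, conv (pcoef (2 * (1 + 4 * 'X) ^+ 2)) a n
                 = pcoef (1 + 36 * 'X) n + s n)].

(* Main.v *)
Require Import Defs.
From HB Require Import structures.
From mathcomp Require Import all_boot all_order all_algebra.
From mathcomp Require Import ring lra zify.
Import Order.TTheory GRing.Theory Num.Theory.
Local Open Scope ring_scope.

Ltac nz1 := first [ done | assumption | (apply: lt0r_neq0; lra) | (apply: ltr0_neq0; lra)
  | (apply: expf_neq0; nz1) | (apply: mulf_neq0; nz1) ].
Ltac nzt := try done; repeat (apply/andP; split); try nz1.

Section Aux.
Variable R : realFieldType.

Definition tt (k : nat) : R := (-3) ^+ k / (k`!)%:R * \prod_(i < k) (i%:R - 3 / 2).
Definition TT (m : nat) : R := \sum_(k < m.+1) tt k.
Definition BB (n : nat) : R := 'C(2 * n, n)%:R.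

Lemma natSn (n : nat) : (n.+1)%:R = n%:R + 1 :> R.
Proof. by rewrite natr1. Qed.

Lemma natS_neq0 (n : nat) : (n.+1)%:R != 0 :> R.
Proof. by rewrite pnatr_eq0. Qed.

Lemma fact_neq0 (n : nat) : (n`!)%:R != 0 :> R.
Proof. by rewrite pnatr_eq0 -lt0n fact_gt0. Qed.

Lemma half_neq0 (n i : nat) : n%:R - i%:R - 1 / 2 != 0 :> R.
Proof.
apply/eqP => H.
have H2 : (2 * n)%:R = (2 * i + 1)%:R :> R by rewrite natrM natrD; lra.
move/eqP: H2; rewrite eqr_nat => /eqP H3. lia.
Qed.

Lemma oddlin (n k : nat) : n%:R * 2 - (2 * k + 1)%:R != 0 :> R.
Proof.
apply/eqP => H.
have H2 : (2 * n)%:R = (2 * k + 1)%:R :> R by rewrite natrM; lra.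
move/eqP: H2; rewrite eqr_nat => /eqP H3. lia.
Qed.

Lemma tt_rec k : tt k.+1 = tt k * (-3) * (k%:R - 3 / 2) / (k.+1)%:R.
Proof.
rewrite /tt big_ord_recr /= factS natrM exprS.
have := fact_neq0 k; have := ler0n R k => h1 h2.
field. rewrite h2 andbT. apply: lt0r_neq0. lra.
Qed.


Lemma BB_fact n : BB n * (n`!%:R) ^+ 2 = (2 * n)`!%:R.
Proof.
rewrite /BB -natrX -natrM expnS expn1.
have h : (n <= 2 * n)%N by lia.
have := bin_fact h. have -> : (2 * n - n = n)%N by lia. by move=> ->.
Qed.

Lemma BB_rec n : BB n.+1 * (n.+1)%:R = 2 * (2 * n%:R + 1) * BB n.
Proof.
have e1 := BB_fact n. have e2 := BB_fact n.+1.
have h2 : (2 * n.+1 = (2 * n).+2)%N by lia.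
move: e2; rewrite h2 !factS !natrM => e2.
have hf := fact_neq0 n. have hn := ler0n R n.
have B0 : BB n = (2 * n)`!%:R / (n`!%:R) ^+ 2 by rewrite -e1; field.
have B1 : BB n.+1 = (2 * n).+2%:R * ((2 * n).+1%:R * (2 * n)`!%:R) / (n.+1%:R * n`!%:R) ^+ 2.
  rewrite -e2; field; nzt.
rewrite B0 B1 -!natr1 natrM. field; nzt.
Qed.


Lemma tt0 : tt 0 = 1.
Proof. by rewrite /tt big_ord0 expr0 fact0 mulr1 divr1. Qed.

Lemma tt_BB m : tt m * (-4) ^+ m * (4 * ((m%:R - 1 / 2) * (m%:R - 3 / 2))) = 3 ^+ m.+1 * BB m.
Proof.
elim: m => [|m IH].
  rewrite tt0 /BB /= bin0 expr0 expr1. field; nzt.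
have hm := ler0n R m.
have h1 : m%:R * 2 - 1 != 0 :> R := oddlin m 0.
have h3 : m%:R * 2 - 3 != 0 :> R := oddlin m 1.
have Ht : tt m = 3 ^+ m.+1 * BB m / ((-4) ^+ m * (4 * ((m%:R - 1 / 2) * (m%:R - 3 / 2)))).
  rewrite -IH. field; nzt.
have hB : BB m.+1 = 2 * (2 * m%:R + 1) * BB m / m.+1%:R.
  rewrite -BB_rec. field; nzt.
rewrite tt_rec Ht hB -!natr1 !exprS. field; nzt.
Qed.

Lemma conv_w (u : nat -> R) m :
  2 * \sum_(i < m.+1) i%:R * u i * u (m - i)%N = m%:R * conv u u m.
Proof.
rewrite mulr_natl mulr2n {2}(reindex_inj rev_ord_inj) /= -big_split /conv mulr_sumr.
apply: eq_bigr => i _ /=.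
have hi : (i <= m)%N by rewrite -ltnS.
rewrite subSS subKn // natrB //. ring.
Qed.

Definition uu n : R := (-4) ^+ n * tt n.

Lemma uu_rec n : (n.+1)%:R * uu n.+1 = (12 * n%:R - 18) * uu n.
Proof. rewrite /uu tt_rec exprS. have := ler0n R n => hn. field; nzt. Qed.

Lemma uu0 : uu 0 = 1.
Proof. by rewrite /uu tt0 expr0 mulr1. Qed.

Lemma w_rec n : (n.+1)%:R * conv uu uu n.+1 = (12 * n%:R - 36) * conv uu uu n.
Proof.
have e1 := conv_w uu n.+1; have e2 := conv_w uu n.
rewrite big_ord_recl /= mul0r mul0r add0r in e1.
have hS : \sum_(i < n.+1) (bump 0 i)%:R * uu (bump 0 i) * uu (n.+1 - bump 0 i)%N
   = 12 * \sum_(i < n.+1) i%:R * uu i * uu (n - i)%N - 18 * conv uu uu n.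
  rewrite /conv !mulr_sumr -sumrB.
  apply: eq_bigr => i _. rewrite /bump /= ?add1n subSS uu_rec. ring.
rewrite hS in e1. rewrite -e1 mulrBl -mulrA -e2. ring.
Qed.

Definition cf3 (n : nat) : R :=
  match n with O => 1 | S O => -36 | S (S O) => 432 | S (S (S O)) => -1728 | _ => 0 end.

Lemma pcoef3 n : pcoef ((1 - 12 * 'X) ^+ 3) n = cf3 n.
Proof.
have -> : (1 - 12 * 'X) ^+ 3 = 1 - 36 * 'X + 432 * 'X^2 - 1728 * 'X^3 :> {poly R}.
  ring.
rewrite /pcoef !coefD !coefN !mulr_natl !coefMn coef1 coefX !coefXn.
case: n => [|[|[|[|n]]]]; rewrite /= ?mul0rn ?mulr1n; ring.
Qed.

Lemma cf3_rec n : (n.+1)%:R * cf3 n.+1 = (12 * n%:R - 36) * cf3 n.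
Proof. case: n => [|[|[|[|n]]]] /=; rewrite ?mulr0 ?mul0r //; ring. Qed.

Lemma w_eq n : conv uu uu n = cf3 n.
Proof.
elim: n => [|n IH].
  by rewrite /conv big_ord_recl big_ord0 /= uu0 mulr1 addr0.
apply: (mulfI (natS_neq0 n)). by rewrite w_rec cf3_rec IH.
Qed.

Lemma conv_split (h : nat -> R) m :
  conv h h m.+1 = 2 * h 0%N * h m.+1 + \sum_(i < m) h i.+1 * h (m - i)%N.
Proof.
rewrite /conv big_ord_recl big_ord_recr /= /bump /= !add1n subn0 subnn.
rewrite (eq_bigr (fun i : 'I_m => h i.+1 * h (m - i)%N)); last by move=> i _; rewrite subSS.
ring.
Qed.

Lemma conv_uniq (f g : nat -> R) : f 0%N = 1 -> g 0%N = 1 ->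
  (forall n, conv f f n = conv g g n) -> forall n, f n = g n.
Proof.
move=> f0 g0 H n; elim/ltn_ind: n => [[|m] IH]; first by rewrite f0 g0.
have := H m.+1; rewrite !conv_split f0 g0.
rewrite (eq_bigr (fun i : 'I_m => g i.+1 * g (m - i)%N)); last first.
  move=> i _; have hi := ltn_ord i; rewrite !IH //; lia.
move=> E. have : 2 * f m.+1 = 2 * g m.+1 by lra.
by move/(mulfI (natS_neq0 1)).
Qed.

Definition F2 n : R := (-4) ^+ n * (1 - 8 * n%:R) / 16 * (8 - TT n.+1)
   + BB n * 3 ^+ (n + 3) / (32 * (n%:R + 1)).

Lemma tt_sol n : tt n.+2 = 3 ^+ n.+3 * BB n.+2 /
   ((-4) ^+ n.+2 * (4 * ((n.+2%:R - 1 / 2) * (n.+2%:R - 3 / 2)))).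
Proof.
rewrite -tt_BB. have := ler0n R n => hn. rewrite -!natr1. field; nzt.
Qed.

Lemma BB_sol n : BB n.+1 = 2 * (2 * n%:R + 1) * BB n / n.+1%:R.
Proof. rewrite -BB_rec. have := ler0n R n => hn. field; nzt. Qed.

Lemma F2_rec n : 2 * F2 n.+2 + 16 * F2 n.+1 + 32 * F2 n = uu n.+2.
Proof.
have hn := ler0n R n.
rewrite /F2 /uu.
have -> : TT n.+3 = TT n.+1 + tt n.+2 + tt n.+3 by rewrite /TT big_ord_recr /= big_ord_recr.
have -> : TT n.+2 = TT n.+1 + tt n.+2 by rewrite /TT big_ord_recr.
rewrite (tt_rec n.+2) tt_sol !BB_sol !(natSn n.+2) !(natSn n.+1) !(natSn n) !exprD !exprS expr0.
field; nzt.
Qed.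

Definition Pf n k : R := \prod_(i < k) (n%:R - i%:R).
Definition Qf n k : R := \prod_(i < k.+2) (n%:R - i%:R - 1 / 2).
Definition sig n k : R := 3 ^+ n.+1 * Pf n k / (8 * (-3) ^+ k * Qf n k).
Definition trm n k : R := 3 ^+ n.+1 * (k%:R + 1) * Pf n k / (8 * (-3) ^+ k * Qf n k).
Definition UU n : R := \sum_(k < n.+1) trm n k.
Definition WW n : R := \sum_(k < n.+1) sig n k.

Lemma Qf_neq0 n k : Qf n k != 0.
Proof. apply/prodf_neq0 => i _; exact: half_neq0. Qed.

Lemma Pf_S n k : Pf n.+1 k.+1 = (n%:R + 1) * Pf n k.
Proof.
rewrite /Pf big_ord_recl /= subr0 natSn; congr (_ * _).
apply: eq_bigr => i _; rewrite /bump /= ?add1n !natSn; ring.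
Qed.

Lemma Qf_S n k : Qf n.+1 k.+1 = (n%:R + 1 / 2) * Qf n k.
Proof.
rewrite /Qf big_ord_recl /= subr0 natSn. congr (_ * _); first by field.
apply: eq_bigr => i _; rewrite /bump /= ?add1n !natSn; ring.
Qed.

Lemma sig_S n k : sig n.+1 k.+1 = (- (n%:R + 1) / (n%:R + 1 / 2)) * sig n k.
Proof.
have hn := ler0n R n. have hq := Qf_neq0 n k.
rewrite /sig Pf_S Qf_S !exprS. field; nzt.
Qed.

Lemma sig0 n : sig n.+1 0 = 3 ^+ n.+2 / (8 * ((n%:R + 1 / 2) * (n%:R - 1 / 2))).
Proof.
rewrite /sig /Pf /Qf big_ord0 !big_ord_recr big_ord0 /= expr0 mul1r mulr1 (natSn n).
rewrite subr0 (_ : 1%:R = 1) // mulr1. congr (_ / (8 * _)). field; nzt.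
Qed.

Lemma trmE n k : trm n k = (k%:R + 1) * sig n k.
Proof. rewrite /trm /sig. ring. Qed.

Lemma W_S n : WW n.+1 = sig n.+1 0 + (- (n%:R + 1) / (n%:R + 1 / 2)) * WW n.
Proof.
rewrite /WW big_ord_recl mulr_sumr; congr (_ + _).
apply: eq_bigr => i _. by rewrite /bump /= ?add1n sig_S.
Qed.

Lemma U_S n : UU n.+1 = sig n.+1 0 + (- (n%:R + 1) / (n%:R + 1 / 2)) * (UU n + WW n).
Proof.
rewrite /UU /WW big_ord_recl trmE /= -big_split mulr_sumr.
rewrite (_ : (0%:R + 1) = 1 :> R); last by rewrite add0r.
rewrite mul1r; congr (_ + _).
apply: eq_bigr => i _. rewrite /bump /= ?add1n !trmE sig_S natSn. ring.
Qed.

Lemma BB_neq0 n : BB n != 0.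
Proof. by rewrite /BB pnatr_eq0 -lt0n bin_gt0; lia. Qed.

Lemma tt_sol1 n : tt n.+1 = 3 ^+ n.+2 * BB n.+1 /
   ((-4) ^+ n.+1 * (4 * ((n.+1%:R - 1 / 2) * (n.+1%:R - 3 / 2)))).
Proof.
rewrite -tt_BB. have := ler0n R n => hn.
have h1 : n.+1%:R * 2 - 1 != 0 :> R := oddlin n.+1 0.
have h3 : (1 + n%:R) * 2 - 3 != 0 :> R by rewrite nat1r; exact: (oddlin n.+1 1).
have h4 : 0 < n.+1%:R :> R := ltr0Sn R n.
field; nzt.
Qed.

Lemma UW n : (BB n * WW n = (-4) ^+ n * TT n / 2) /\ 
  (BB n * UU n = - ((-4) ^+ n * (1 - 8 * n%:R)) * TT n.+1 / 16
                + BB n * 3 ^+ (n + 3) / (32 * (n%:R + 1))).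
Proof.
elim: n => [|n [hW hU]].
  rewrite /WW /UU /TT !big_ord_recl !big_ord0 trmE /sig /Pf /Qf !big_ord_recr !big_ord0 /=.
  rewrite (tt_rec 0) tt0 /BB /= bin0.
  by split; field; nzt.
have hn := ler0n R n. have h1 : n%:R * 2 - 1 != 0 :> R := oddlin n 0.
have hB := BB_neq0 n.
have eW : WW n = (-4) ^+ n * TT n / 2 / BB n by rewrite -hW; field; nzt.
have eU : UU n = (- ((-4) ^+ n * (1 - 8 * n%:R)) * TT n.+1 / 16
                + BB n * 3 ^+ (n + 3) / (32 * (n%:R + 1))) / BB n by rewrite -hU; field; nzt.
rewrite W_S U_S sig0 eU eW.
have -> : TT n.+2 = TT n + tt n.+1 + tt n.+2 by rewrite /TT big_ord_recr /= big_ord_recr.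
have -> : TT n.+1 = TT n + tt n.+1 by rewrite /TT big_ord_recr.
rewrite (tt_rec n.+1) tt_sol1 !BB_sol !(natSn n.+1) !(natSn n) !exprD !exprS expr0.
have h3 : (n%:R + 1) * 2 - 3 != 0 :> R.
  by have -> : (n%:R + 1) * 2 - 3 = n%:R * 2 - 1 :> R by ring.
split; field; nzt.
Qed.

Definition cf2 (n : nat) : R :=
  match n with O => 2 | S O => 16 | S (S O) => 32 | _ => 0 end.
Definition cf1 (n : nat) : R :=
  match n with O => 1 | S O => 36 | _ => 0 end.

Lemma pcoef2 n : pcoef (2 * (1 + 4 * 'X) ^+ 2) n = cf2 n.
Proof.
have -> : 2 * (1 + 4 * 'X) ^+ 2 = 2 + 16 * 'X + 32 * 'X^2 :> {poly R}.
  ring.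
rewrite /pcoef !coefD !mulr_natl !coefMn coefC coefX !coefXn.
case: n => [|[|[|n]]]; rewrite /= ?mul0rn ?mulr1n; ring.
Qed.

Lemma pcoef1 n : pcoef (1 + 36 * 'X) n = cf1 n.
Proof.
rewrite /pcoef !coefD !mulr_natl !coefMn coef1 coefX.
case: n => [|[|n]]; rewrite /= ?mul0rn ?mulr1n; ring.
Qed.

Lemma conv_ext (f g h : nat -> R) n : (forall i, f i = g i) -> conv f h n = conv g h n.
Proof. by move=> e; apply: eq_bigr => i _; rewrite e. Qed.

Lemma conv2_0 (a : nat -> R) : conv cf2 a 0 = 2 * a 0%N.
Proof. by rewrite /conv big_ord_recl big_ord0 /= addr0. Qed.

Lemma conv2_1 (a : nat -> R) : conv cf2 a 1 = 2 * a 1%N + 16 * a 0%N.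
Proof. by rewrite /conv !big_ord_recl big_ord0 /= addr0. Qed.

Lemma conv2_S (a : nat -> R) n : conv cf2 a n.+2 = 2 * a n.+2 + 16 * a n.+1 + 32 * a n.
Proof.
rewrite /conv !big_ord_recl /= big1 ?addr0 ?addrA.
  have e1 : (n.+2 - (1 + 0) = n.+1)%N by rewrite addn0 subSS subn0.
  have e2 : (n.+2 - (1 + (1 + 0)) = n)%N by rewrite addn0 add1n !subSS subn0.
  by rewrite /bump /= ?subn0 e1 e2.
by move=> i _; rewrite mul0r.
Qed.

Lemma F2_0 : F2 0 = 1.
Proof.
rewrite /F2 /TT !big_ord_recr big_ord0 /= (tt_rec 0) tt0 /BB /= bin0. field; nzt.
Qed.

Lemma F2_1 : F2 1 = 1.
Proof.
rewrite /F2 /TT !big_ord_recr big_ord0 /= (tt_rec 1) (tt_rec 0) tt0 /BB /=.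
have -> : 'C(2 * 1, 1) = 2%N by []. field; nzt.
Qed.

Lemma a_F2 (a s : nat -> R) : is_gf_A220910 a s -> forall n, a n = F2 n.
Proof.
case => s0 Hs Ha.
have sE : forall n, s n = uu n.
  apply: conv_uniq => // [|n]; first exact: uu0. by rewrite Hs pcoef3 w_eq.
have Ha' : forall n, conv cf2 a n = cf1 n + s n.
  move=> n; rewrite -pcoef1 -Ha; apply: conv_ext => i; by rewrite pcoef2.
have a0 : a 0%N = 1.
  have := Ha' 0%N; rewrite conv2_0 s0 /= => E. lra.
have a1 : a 1%N = 1.
  have := Ha' 1%N; rewrite conv2_1 sE a0 /uu (tt_rec 0) tt0 /= => E. lra.
suff H : forall n, a n = F2 n /\ a n.+1 = F2 n.+1 by move=> n; case: (H n).
elim => [|n [h0 h1]]; first by rewrite F2_0 F2_1.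
split => //. have := Ha' n.+2; rewrite conv2_S sE h0 h1 -F2_rec [cf1 _]/= add0r => E.
lra.
Qed.

End Aux.

Theorem mainTheorem8 (R : realFieldType) (a s : nat -> R) :
  is_gf_A220910 a s ->
  forall n : nat,
    a n = (1 - 8 * n%:R) / 2 * (-4) ^+ n
          + 'C(2 * n, n)%:R *
            \sum_(k < n.+1)
              (3 ^+ n.+1 * (k%:R + 1) * \prod_(i < k) (n%:R - i%:R))
              / (8 * (-3) ^+ k * \prod_(i < k.+2) (n%:R - i%:R - 1 / 2))
    /\
    a n = (-4) ^+ n * (1 - 8 * n%:R) / 16 *
            (8 - \sum_(k < n.+2)
                   (-3) ^+ k / (k`!)%:R * \prod_(i < k) (i%:R - 3 / 2))
          + 'C(2 * n, n)%:R * 3 ^+ (n + 3) / (32 * (n%:R + 1)).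
Proof.
move=> H n. have E := @a_F2 R a s H n. have [_ hU] := UW R n.
split; last exact: E.
transitivity ((1 - 8 * n%:R) / 2 * (-4) ^+ n + BB R n * UU R n); last by [].
rewrite E hU /F2. have hn := ler0n R n. field; nzt.
Qed.
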